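(* Let $(\mathcal C,\otimes,I,a,l,r)$ be a monoidal category, let $(F,\Delta,\varepsilon,F_2,F_0)$ and $(G,\delta,\epsilon,G_2,G_0)$ be bicomonads on $\mathcal C$, and let $\varphi:FG\to GF$ be a comonad distributive law. For $\varphi$-bicomodules $(X,\theta^X,\rho^X)$ and $(Y,\theta^Y,\rho^Y)$ define on $X\otimes Y$ the $F$-coaction $\theta^{X\otimes Y}=F_2(X,Y)\circ(\theta^X\otimes\theta^Y)$ and the $G$-coaction $\rho^{X\otimes Y}=G_2(X,Y)\circ(\rho^X\otimes\rho^Y)$, and give $I$ the coactions $F_0$ and $G_0$. Then $(\mathcal C^{(F,G)}(\varphi),\otimes,I,a,l,r)$ is a monoidal category (with these structures) if and only if for all objects $M,N$ of $\mathcal C$: (a) $\varphi_{M\otimes N}\circ F(G_2(M,N))\circ F_2(GM,GN)=G(F_2(M,N))\circ G_2(FM,FN)\circ(\varphi_M\otimes\varphi_N)$; (b) $\varphi_I\circ F(G_0)\circ F_0=G(F_0)\circ G_0$.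
   Context: A comonad $(F,\Delta,\varepsilon)$ on a category $\mathcal C$ is an endofunctor $F$ with natural transformations $\Delta:F\to FF$, $\varepsilon:F\to \mathrm{id}$ such that $F\Delta\circ\Delta=\Delta F\circ\Delta$ and $F\varepsilon\circ\Delta=\varepsilon F\circ\Delta=\mathrm{id}_F$. An $F$-comodule is a pair $(X,\theta^X)$ with $\theta^X:X\to FX$, $F\theta^X\circ\theta^X=\Delta_X\circ\theta^X$, $\varepsilon_X\circ\theta^X=\mathrm{id}_X$. For comonads $(F,\Delta,\varepsilon)$, $(G,\delta,\epsilon)$, a comonad distributive law is a natural transformation $\varphi:FG\to GF$ with $G\varphi\circ\varphi G\circ F\delta=\delta F\circ\varphi$, $\varphi F\circ F\varphi\circ\Delta G=G\Delta\circ\varphi$, $G\varepsilon\circ\varphi=\varepsilon G$, $\epsilon F\circ\varphi=F\epsilon$. A $\varphi$-bicomodule is a triple $(M,\theta^M,\rho^M)$ with $(M,\theta^M)$ an $F$-comodule, $(M,\rho^M)$ a $G$-comodule and $\varphi_M\circ F(\rho^M)\circ\theta^M=G(\theta^M)\circ\rho^M$; morphisms are maps that are both $F$- and $G$-comodule maps; this category is $\mathcal C^{(F,G)}(\varphi)$. A bicomonad on a monoidal category is a comonad $(G,\delta,\epsilon)$ which is also a monoidal functor $(G,G_2,G_0)$ (natural $G_2(X,Y):GX\otimes GY\to G(X\otimes Y)$, morphism $G_0:I\to GI$, satisfying the usual associativity and unit coherence with $a,l,r$) such that $G(G_2(X,Y))\circ G_2(GX,GY)\circ(\delta_X\otimes\delta_Y)=\delta_{X\otimes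 Y}\circ G_2(X,Y)$, $\epsilon_{X\otimes Y}\circ G_2(X,Y)=\epsilon_X\otimes\epsilon_Y$, $G(G_0)\circ G_0=\delta_I\circ G_0$, $\epsilon_I\circ G_0=\mathrm{id}_I$. *)

(* Defs.v *)
Set Implicit Arguments.
Unset Strict Implicit.

Record Category := {
  Ob :> Type;
  Hom : Ob -> Ob -> Type;
  idm : forall A, Hom A A;
  comp : forall A B D, Hom B D -> Hom A B -> Hom A D;
  comp_idl : forall A B (f : Hom A B), comp (idm B) f = f;
  comp_idr : forall A B (f : Hom A B), comp f (idm A) = f;
  comp_assoc : forall A B D E (h : Hom D E) (g : Hom B D) (f : Hom A B),
      comp h (comp g f) = comp (comp h g) f }.
Arguments Hom {c} _ _.
Arguments idm {c} A.
Arguments comp {c A B D} _ _.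
Infix "∘" := comp (at level 40, left associativity).

Record Functor (C D : Category) := {
  fobj :> C -> D;
  fmap : forall A B, Hom A B -> Hom (fobj A) (fobj B);
  fmap_id : forall A, fmap (idm A) = idm (fobj A);
  fmap_comp : forall A B E (g : Hom B E) (f : Hom A B),
      fmap (g ∘ f) = fmap g ∘ fmap f }.
Arguments fmap {C D} f0 {A B} _.

Record MonoidalCategory := {
  mcat :> Category;
  tens : mcat -> mcat -> mcat;
  tensm : forall A A' B B', Hom A A' -> Hom B B' -> Hom (tens A B) (tens A' B');
  tensm_id : forall A B, tensm (idm A) (idm B) = idm (tens A B);
  tensm_comp : forall A A' A'' B B' B'' (f : Hom A A') (f' : Hom A' A'')
      (g : Hom B B') (g' : Hom B' B''),
      tensm (f' ∘ f) (g' ∘ g) = tensm f' g' ∘ tensm f g;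
  munit : mcat;
  assoc : forall A B D, Hom (tens (tens A B) D) (tens A (tens B D));
  assoc_inv : forall A B D, Hom (tens A (tens B D)) (tens (tens A B) D);
  assoc_iso1 : forall A B D, assoc_inv A B D ∘ assoc A B D = idm _;
  assoc_iso2 : forall A B D, assoc A B D ∘ assoc_inv A B D = idm _;
  assoc_nat : forall A A' B B' D D' (f : Hom A A') (g : Hom B B') (h : Hom D D'),
      assoc A' B' D' ∘ tensm (tensm f g) h = tensm f (tensm g h) ∘ assoc A B D;
  lunit : forall A, Hom (tens munit A) A;
  lunit_inv : forall A, Hom A (tens munit A);
  lunit_iso1 : forall A, lunit_inv A ∘ lunit A = idm _;
  lunit_iso2 : forall A, lunit A ∘ lunit_inv A = idm _;
  lunit_nat : forall A A' (f : Hom A A'), f ∘ lunit A = lunit A' ∘ tensm (idm munit) f;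
  runit : forall A, Hom (tens A munit) A;
  runit_inv : forall A, Hom A (tens A munit);
  runit_iso1 : forall A, runit_inv A ∘ runit A = idm _;
  runit_iso2 : forall A, runit A ∘ runit_inv A = idm _;
  runit_nat : forall A A' (f : Hom A A'), f ∘ runit A = runit A' ∘ tensm f (idm munit);
  pentagon : forall A B D E,
      tensm (idm A) (assoc B D E) ∘ assoc A (tens B D) E ∘ tensm (assoc A B D) (idm E)
      = assoc A B (tens D E) ∘ assoc (tens A B) D E;
  triangle : forall A B,
      tensm (idm A) (lunit B) ∘ assoc A munit B = tensm (runit A) (idm B) }.
Arguments tens {m} _ _.
Arguments tensm {m A A' B B'} _ _.
Arguments munit {m}.
Arguments assoc {m} A B D.
Arguments assoc_inv {m} A B D.
Arguments lunit {m} A.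
Arguments lunit_inv {m} A.
Arguments runit {m} A.
Arguments runit_inv {m} A.
Infix "⊗" := tens (at level 35, right associativity).

Record Comonad (C : Category) := {
  cfun :> Functor C C;
  cdelta : forall X, Hom (cfun X) (cfun (cfun X));
  ceps : forall X, Hom (cfun X) X;
  cdelta_nat : forall X Y (f : Hom X Y),
      cdelta Y ∘ fmap cfun f = fmap cfun (fmap cfun f) ∘ cdelta X;
  ceps_nat : forall X Y (f : Hom X Y), ceps Y ∘ fmap cfun f = f ∘ ceps X;
  ccoassoc : forall X, fmap cfun (cdelta X) ∘ cdelta X = cdelta (cfun X) ∘ cdelta X;
  ccounit_l : forall X, fmap cfun (ceps X) ∘ cdelta X = idm (cfun X);
  ccounit_r : forall X, ceps (cfun X) ∘ cdelta X = idm (cfun X) }.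
Arguments cdelta {C} c X.
Arguments ceps {C} c X.

Definition is_comodule (C : Category) (F : Comonad C) (X : C) (th : Hom X (F X)) : Prop :=
  fmap F th ∘ th = cdelta F X ∘ th /\ ceps F X ∘ th = idm X.

Arguments is_comodule {C} F {X} th.

Definition is_comodule_map (C : Category) (F : Comonad C) (X Y : C)
    (thX : Hom X (F X)) (thY : Hom Y (F Y)) (f : Hom X Y) : Prop :=
  fmap F f ∘ thX = thY ∘ f.
Arguments is_comodule_map {C F X Y} thX thY f.

Record DistLaw (C : Category) (F G : Comonad C) := {
  dlaw : forall X, Hom (F (G X)) (G (F X));
  dlaw_nat : forall X Y (f : Hom X Y),
      dlaw Y ∘ fmap F (fmap G f) = fmap G (fmap F f) ∘ dlaw X;
  dlaw_delta : forall X,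
      fmap G (dlaw X) ∘ dlaw (G X) ∘ fmap F (cdelta G X) = cdelta G (F X) ∘ dlaw X;
  dlaw_Delta : forall X,
      dlaw (F X) ∘ fmap F (dlaw X) ∘ cdelta F (G X) = fmap G (cdelta F X) ∘ dlaw X;
  dlaw_varepsilon : forall X, fmap G (ceps F X) ∘ dlaw X = ceps F (G X);
  dlaw_epsilon : forall X, ceps G (F X) ∘ dlaw X = fmap F (ceps G X) }.
Arguments dlaw {C F G} d X.

Definition is_bicomodule (C : Category) (F G : Comonad C) (phi : DistLaw F G)
    (M : C) (th : Hom M (F M)) (rh : Hom M (G M)) : Prop :=
  is_comodule F th /\ is_comodule G rh /\
  dlaw phi M ∘ fmap F rh ∘ th = fmap G th ∘ rh.
Arguments is_bicomodule {C F G} phi {M} th rh.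

Definition is_bicomodule_map (C : Category) (F G : Comonad C) (phi : DistLaw F G)
    (X Y : C) (thX : Hom X (F X)) (rhX : Hom X (G X))
    (thY : Hom Y (F Y)) (rhY : Hom Y (G Y)) (f : Hom X Y) : Prop :=
  is_comodule_map thX thY f /\ is_comodule_map rhX rhY f.
Arguments is_bicomodule_map {C F G} phi {X Y} thX rhX thY rhY f.

Record Bicomod (C : Category) (F G : Comonad C) (phi : DistLaw F G) := {
  bob :> C;
  bth : Hom bob (F bob);
  brh : Hom bob (G bob);
  blaws : is_bicomodule phi bth brh }.
Arguments bth {C F G phi} b.
Arguments brh {C F G phi} b.

Record Bicomonad (C : MonoidalCategory) := {
  bcm :> Comonad C;
  bF2 : forall X Y : C, Hom (bcm X ⊗ bcm Y) (bcm (X ⊗ Y));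
  bF0 : Hom munit (bcm munit);
  bF2_nat : forall X X' Y Y' (f : Hom X X') (g : Hom Y Y'),
      fmap bcm (tensm f g) ∘ bF2 X Y = bF2 X' Y' ∘ tensm (fmap bcm f) (fmap bcm g);
  bF2_assoc : forall X Y Z : C,
      fmap bcm (assoc X Y Z) ∘ bF2 (X ⊗ Y) Z ∘ tensm (bF2 X Y) (idm (bcm Z))
      = bF2 X (Y ⊗ Z) ∘ tensm (idm (bcm X)) (bF2 Y Z) ∘ assoc (bcm X) (bcm Y) (bcm Z);
  bF0_l : forall X : C,
      fmap bcm (lunit X) ∘ bF2 munit X ∘ tensm bF0 (idm (bcm X)) = lunit (bcm X);
  bF0_r : forall X : C,
      fmap bcm (runit X) ∘ bF2 X munit ∘ tensm (idm (bcm X)) bF0 = runit (bcm X);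
  bdelta2 : forall X Y : C,
      fmap bcm (bF2 X Y) ∘ bF2 (bcm X) (bcm Y) ∘ tensm (cdelta bcm X) (cdelta bcm Y)
      = cdelta bcm (X ⊗ Y) ∘ bF2 X Y;
  beps2 : forall X Y : C,
      ceps bcm (X ⊗ Y) ∘ bF2 X Y = tensm (ceps bcm X) (ceps bcm Y);
  bdelta0 : fmap bcm bF0 ∘ bF0 = cdelta bcm munit ∘ bF0;
  beps0 : ceps bcm munit ∘ bF0 = idm munit }.
Arguments bF2 {C} b X Y.
Arguments bF0 {C} b.

Definition tens_coact (C : MonoidalCategory) (F : Bicomonad C) (X Y : C)
    (thX : Hom X (F X)) (thY : Hom Y (F Y)) : Hom (X ⊗ Y) (F (X ⊗ Y)) :=
  bF2 F X Y ∘ tensm thX thY.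
Arguments tens_coact {C} F {X Y} thX thY.

(* "(C^(F,G)(phi), ⊗, I, a, l, r) is a monoidal category with the structures
   described": the tensor product of phi-bicomodules (with the coactions
   tens_coact) and I (with F0, G0) are phi-bicomodules, the tensor product of
   bicomodule morphisms is a bicomodule morphism, and the components of
   a, l, r (and of their inverses) at bicomodules are bicomodule morphisms.
   Functoriality of ⊗, naturality, invertibility, pentagon and triangle are
   equations between the underlying morphisms of C, which hold in C. *)
Definition bicomod_monoidal (C : MonoidalCategory) (F G : Bicomonad C)
    (phi : DistLaw F G) : Prop :=
  let thT := fun (X Y : Bicomod phi) => tens_coact F (bth X) (bth Y) in
  let rhT := fun (X Y : Bicomod phi) => tens_coact G (brh X) (brh Y) in
  (forall X Y : Bicomod phi, is_bicomodule phi (thT X Y) (rhT X Y)) /\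
  is_bicomodule phi (bF0 F) (bF0 G) /\
  (forall (X X' Y Y' : Bicomod phi) (f : Hom (bob X) (bob X')) (g : Hom (bob Y) (bob Y')),
      is_bicomodule_map phi (bth X) (brh X) (bth X') (brh X') f ->
      is_bicomodule_map phi (bth Y) (brh Y) (bth Y') (brh Y') g ->
      is_bicomodule_map phi (thT X Y) (rhT X Y) (thT X' Y') (rhT X' Y') (tensm f g)) /\
  (forall X Y Z : Bicomod phi,
      is_bicomodule_map phi
        (tens_coact F (thT X Y) (bth Z)) (tens_coact G (rhT X Y) (brh Z))
        (tens_coact F (bth X) (thT Y Z)) (tens_coact G (brh X) (rhT Y Z))
        (assoc (bob X) (bob Y) (bob Z)) /\
      is_bicomodule_map phi
        (tens_coact F (bth X) (thT Y Z)) (tens_coact G (brh X) (rhT Y Z))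
        (tens_coact F (thT X Y) (bth Z)) (tens_coact G (rhT X Y) (brh Z))
        (assoc_inv (bob X) (bob Y) (bob Z))) /\
  (forall X : Bicomod phi,
      is_bicomodule_map phi
        (tens_coact F (bF0 F) (bth X)) (tens_coact G (bF0 G) (brh X))
        (bth X) (brh X) (lunit (bob X)) /\
      is_bicomodule_map phi
        (bth X) (brh X)
        (tens_coact F (bF0 F) (bth X)) (tens_coact G (bF0 G) (brh X))
        (lunit_inv (bob X))) /\
  (forall X : Bicomod phi,
      is_bicomodule_map phi
        (tens_coact F (bth X) (bF0 F)) (tens_coact G (brh X) (bF0 G))
        (bth X) (brh X) (runit (bob X)) /\
      is_bicomodule_map phi
        (bth X) (brh X)
        (tens_coact F (bth X) (bF0 F)) (tens_coact G (brh X) (bF0 G))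
        (runit_inv (bob X))).

(* Main.v *)
Require Import Defs.
From Stdlib Require Import Setoid Morphisms.

Ltac lassoc := repeat rewrite comp_assoc.
Ltac rw H := lassoc;
  first [ rewrite H
        | match type of H with @eq (@Hom ?c ?A ?B) ?l ?r =>
            let E := fresh "E" in
            assert (E : forall Z (x : @Hom c B Z), x ∘ l = x ∘ r) by (intros; rewrite H; reflexivity);
            setoid_rewrite comp_assoc in E; rewrite E; clear E
          end ]; lassoc.
Ltac rwb H := let H' := fresh in pose proof (eq_sym H) as H'; rw H'; clear H'.

Lemma tens_comodule (C : MonoidalCategory) (F : Bicomonad C) (X Y : C)
  (thX : Hom X (F X)) (thY : Hom Y (F Y)) :
  is_comodule F thX -> is_comodule F thY -> is_comodule F (tens_coact F thX thY).
Proof.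
  intros [HX1 HX2] [HY1 HY2]; unfold tens_coact; split.
  - rewrite fmap_comp. rw (bF2_nat F thX thY). rwb (tensm_comp thX (fmap F thX) thY (fmap F thY)).
    rewrite HX1, HY1, tensm_comp. rw (bdelta2 F X Y). reflexivity.
  - rw (beps2 F X Y). rewrite <- tensm_comp, HX2, HY2, tensm_id. reflexivity.
Qed.
Lemma unit_comodule (C : MonoidalCategory) (F : Bicomonad C) :
  is_comodule F (bF0 F).
Proof. split; [apply bdelta0 | apply beps0]. Qed.

Lemma tens_map (C : MonoidalCategory) (F : Bicomonad C) (X X' Y Y' : C)
  (thX : Hom X (F X)) (thY : Hom Y (F Y)) (thX' : Hom X' (F X')) (thY' : Hom Y' (F Y'))
  (f : Hom X X') (g : Hom Y Y') :
  is_comodule_map thX thX' f -> is_comodule_map thY thY' g ->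
  is_comodule_map (tens_coact F thX thY) (tens_coact F thX' thY') (tensm f g).
Proof.
  unfold is_comodule_map, tens_coact; intros Hf Hg.
  rw (bF2_nat F f g). rewrite <- !comp_assoc, <- !tensm_comp, Hf, Hg. reflexivity.
Qed.

Lemma assoc_map (C : MonoidalCategory) (F : Bicomonad C) (X Y Z : C)
  (thX : Hom X (F X)) (thY : Hom Y (F Y)) (thZ : Hom Z (F Z)) :
  is_comodule_map (tens_coact F (tens_coact F thX thY) thZ)
                  (tens_coact F thX (tens_coact F thY thZ)) (assoc X Y Z).
Proof.
  unfold is_comodule_map, tens_coact.
  assert (E1 : tensm thX (bF2 F Y Z ∘ tensm thY thZ)
               = tensm (idm (F X)) (bF2 F Y Z) ∘ tensm thX (tensm thY thZ)).
  { rewrite <- tensm_comp, comp_idl. reflexivity. }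
  assert (E2 : tensm (bF2 F X Y ∘ tensm thX thY) thZ
               = tensm (bF2 F X Y) (idm (F Z)) ∘ tensm (tensm thX thY) thZ).
  { rewrite <- tensm_comp, comp_idl. reflexivity. }
  rewrite E1, E2. lassoc.
  rwb (assoc_nat thX thY thZ). rwb (bF2_assoc F X Y Z). reflexivity.
Qed.

Lemma lunit_map (C : MonoidalCategory) (F : Bicomonad C) (X : C) (thX : Hom X (F X)) :
  is_comodule_map (tens_coact F (bF0 F) thX) thX (lunit X).
Proof.
  unfold is_comodule_map, tens_coact.
  assert (E2 : tensm (bF0 F) thX = tensm (bF0 F) (idm (F X)) ∘ tensm (idm munit) thX).
  { rewrite <- tensm_comp, comp_idl, comp_idr. reflexivity. }
  rewrite E2. rw (bF0_l F X). rewrite lunit_nat. reflexivity.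
Qed.

Lemma runit_map (C : MonoidalCategory) (F : Bicomonad C) (X : C) (thX : Hom X (F X)) :
  is_comodule_map (tens_coact F thX (bF0 F)) thX (runit X).
Proof.
  unfold is_comodule_map, tens_coact.
  assert (E2 : tensm thX (bF0 F) = tensm (idm (F X)) (bF0 F) ∘ tensm thX (idm munit)).
  { rewrite <- tensm_comp, comp_idl, comp_idr. reflexivity. }
  rewrite E2. rw (bF0_r F X). rewrite runit_nat. reflexivity.
Qed.

Lemma inv_map (C : Category) (F : Comonad C) (X Y : C)
  (thX : Hom X (F X)) (thY : Hom Y (F Y)) (f : Hom X Y) (g : Hom Y X) :
  g ∘ f = idm X -> f ∘ g = idm Y ->
  is_comodule_map thX thY f -> is_comodule_map thY thX g.
Proof.
  unfold is_comodule_map; intros H1 H2 Hf.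
  rewrite <- (comp_idr (fmap F g ∘ thY)), <- H2. lassoc.
  rwb Hf. rwb (fmap_comp F g f). rewrite H1, fmap_id, comp_idl. reflexivity.
Qed.

Lemma tens_compat (C : MonoidalCategory) (F G : Bicomonad C) (phi : DistLaw F G)
  (Ha : forall M N : C,
      dlaw phi (M ⊗ N) ∘ fmap F (bF2 G M N) ∘ bF2 F (G M) (G N)
      = fmap G (bF2 F M N) ∘ bF2 G (F M) (F N) ∘ tensm (dlaw phi M) (dlaw phi N))
  (X Y : C) (thX : Hom X (F X)) (thY : Hom Y (F Y)) (rhX : Hom X (G X)) (rhY : Hom Y (G Y)) :
  dlaw phi X ∘ fmap F rhX ∘ thX = fmap G thX ∘ rhX ->
  dlaw phi Y ∘ fmap F rhY ∘ thY = fmap G thY ∘ rhY ->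
  dlaw phi (X ⊗ Y) ∘ fmap F (tens_coact G rhX rhY) ∘ tens_coact F thX thY
  = fmap G (tens_coact F thX thY) ∘ tens_coact G rhX rhY.
Proof.
  unfold tens_coact; intros HX HY.
  rewrite !fmap_comp. lassoc. rw (bF2_nat F rhX rhY). rw (Ha X Y).
  rewrite <- !comp_assoc, <- !tensm_comp. lassoc. rewrite HX, HY, tensm_comp. lassoc.
  rwb (bF2_nat G thX thY). reflexivity.
Qed.




Lemma cofree_laws (C : Category) (F G : Comonad C) (phi : DistLaw F G) (M : C) :
  is_bicomodule phi (cdelta F (G M)) (dlaw phi (G M) ∘ fmap F (cdelta G M)).
Proof.
  split; [|split].
  - split; [apply ccoassoc | apply ccounit_r].
  - split.
    + rewrite fmap_comp. lassoc. rwb (dlaw_nat phi (cdelta G M)).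
      rwb (fmap_comp F (fmap G (cdelta G M)) (cdelta G M)). rewrite ccoassoc, fmap_comp. lassoc.
      rw (dlaw_delta phi (G M)). reflexivity.
    + rw (dlaw_epsilon phi (G M)). rewrite <- fmap_comp, ccounit_r, fmap_id. reflexivity.
  - rewrite fmap_comp. lassoc. rwb (cdelta_nat F (cdelta G M)). rw (dlaw_Delta phi (G M)).
    reflexivity.
Qed.

Definition cofree (C : Category) (F G : Comonad C) (phi : DistLaw F G) (M : C) : Bicomod phi :=
  Build_Bicomod (@cofree_laws C F G phi M).

Lemma cofree_k (C : Category) (F G : Comonad C) (phi : DistLaw F G) (M : C) :
  fmap F (fmap G (ceps G M ∘ ceps F (G M)) ∘ (dlaw phi (G M) ∘ fmap F (cdelta G M)))
    ∘ cdelta F (G M) = idm _.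
Proof.
  assert (K : fmap G (ceps G M ∘ ceps F (G M)) ∘ (dlaw phi (G M) ∘ fmap F (cdelta G M))
              = ceps F (G M)).
  { rewrite fmap_comp. lassoc. rw (dlaw_varepsilon phi (G M)).
    rw (ceps_nat F (cdelta G M)). rewrite ccounit_l, comp_idl. reflexivity. }
  rewrite K. apply ccounit_l.
Qed.

Lemma cofree_p (C : Category) (F G : Comonad C) (phi : DistLaw F G) (M : C) :
  fmap G (fmap F (ceps G M ∘ ceps F (G M)) ∘ cdelta F (G M))
    ∘ (dlaw phi (G M) ∘ fmap F (cdelta G M)) = dlaw phi M.
Proof.
  assert (K : fmap F (ceps G M ∘ ceps F (G M)) ∘ cdelta F (G M) = fmap F (ceps G M)).
  { rewrite fmap_comp, <- comp_assoc, ccounit_l. apply comp_idr. }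
  rewrite K. lassoc. rwb (dlaw_nat phi (ceps G M)).
  rewrite <- comp_assoc, <- fmap_comp, ccounit_l, fmap_id. apply comp_idr.
Qed.






Theorem lemma3p1 (C : MonoidalCategory) (F G : Bicomonad C) (phi : DistLaw F G) :
  bicomod_monoidal phi <->
  ((forall M N : C,
      dlaw phi (M ⊗ N) ∘ fmap F (bF2 G M N) ∘ bF2 F (G M) (G N)
      = fmap G (bF2 F M N) ∘ bF2 G (F M) (F N) ∘ tensm (dlaw phi M) (dlaw phi N)) /\
   dlaw phi munit ∘ fmap F (bF0 G) ∘ bF0 F = fmap G (bF0 F) ∘ bF0 G).
Proof.
  split.
  - intros [H1 [H2 _]]. split.
    + intros M N.
      destruct (H1 (@cofree C F G phi M) (@cofree C F G phi N)) as [_ [_ E]].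
      cbn in E. unfold tens_coact in E.
      set (eM := ceps G M ∘ ceps F (G M)) in *.
      set (eN := ceps G N ∘ ceps F (G N)) in *.
      set (rM := dlaw phi (G M) ∘ fmap F (cdelta G M)) in *.
      set (rN := dlaw phi (G N) ∘ fmap F (cdelta G N)) in *.
      pose proof (@cofree_k C F G phi M) as KM. pose proof (@cofree_k C F G phi N) as KN.
      pose proof (@cofree_p C F G phi M) as PM. pose proof (@cofree_p C F G phi N) as PN.
      fold eM rM in KM, PM. fold eN rN in KN, PN.
      match type of E with ?l = _ =>
        transitivity (fmap G (fmap F (tensm eM eN)) ∘ l) end.
      * symmetry. lassoc. rwb (dlaw_nat phi (tensm eM eN)).
        rewrite !fmap_comp. lassoc. rwb (fmap_comp F (fmap G (tensm eM eN)) (bF2 G _ _)).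
        rewrite bF2_nat, !fmap_comp. lassoc.
        rwb (fmap_comp F (tensm (fmap G eM) (fmap G eN)) (tensm rM rN)).
        rewrite <- tensm_comp. rw (bF2_nat F (fmap G eM ∘ rM) (fmap G eN ∘ rN)).
        rewrite <- !comp_assoc, <- tensm_comp, KM, KN, tensm_id, comp_idr. lassoc. reflexivity.
      * rewrite E. lassoc. rwb (fmap_comp G (fmap F (tensm eM eN)) (bF2 F _ _ ∘ tensm (cdelta F (G M)) (cdelta F (G N)))).
        rewrite bF2_nat. rewrite <- (comp_assoc (bF2 F M N)), <- tensm_comp.
        rewrite fmap_comp. lassoc.
        rw (bF2_nat G (fmap F eM ∘ cdelta F (G M)) (fmap F eN ∘ cdelta F (G N))).
        rewrite <- !comp_assoc, <- tensm_comp. lassoc. rewrite PM, PN. reflexivity.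
    + destruct H2 as [_ [_ H2]]. exact H2.
  - intros [Ha Hb]. unfold bicomod_monoidal.
    split; [|split; [|split; [|split; [|split]]]].
    + intros X Y. destruct (blaws X) as [FX [GX CX]]. destruct (blaws Y) as [FY [GY CY]].
      split; [|split].
      * apply tens_comodule; assumption.
      * apply tens_comodule; assumption.
      * apply tens_compat; assumption.
    + split; [|split]; [apply unit_comodule | apply unit_comodule | exact Hb].
    + intros X X' Y Y' f g [Hf1 Hf2] [Hg1 Hg2]. split; apply tens_map; assumption.
    + intros X Y Z. split; split.
      * apply assoc_map.
      * apply assoc_map.
      * eapply inv_map; [apply assoc_iso1 | apply assoc_iso2 | apply assoc_map].
      * eapply inv_map; [apply assoc_iso1 | apply assoc_iso2 | apply assoc_map].
    + intros X. split; split.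
      * apply lunit_map.
      * apply lunit_map.
      * eapply inv_map; [apply lunit_iso1 | apply lunit_iso2 | apply lunit_map].
      * eapply inv_map; [apply lunit_iso1 | apply lunit_iso2 | apply lunit_map].
    + intros X. split; split.
      * apply runit_map.
      * apply runit_map.
      * eapply inv_map; [apply runit_iso1 | apply runit_iso2 | apply runit_map].
      * eapply inv_map; [apply runit_iso1 | apply runit_iso2 | apply runit_map].
Qed.
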